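(* Let $A_1,\dots,A_n$ be events in a probability space and let $j,k\in\{1,\dots,n\}$, with $n>2-\delta_{jk}$, where $\delta_{jk}$ is the Kronecker delta. Then \[ \Pr\Big(\bigcup_{i=1}^n A_i\Big) \ge \frac{1}{n-2+\delta_{jk}}\Big(\sum_{i=1}^n\Pr(A_i) - \sum_{\substack{i=1\\ i\ne j}}^n\Pr(A_i\cap A_j) - \sum_{\substack{i=1\\ i\ne j,k}}^n\Pr(A_i\cap A_k) + \sum_{\substack{i=1\\ i\ne j,k}}^n\Pr(A_i\cap A_j\cap A_k)\Big). \] *)

(* Defs.v *)
From Stdlib Require Import Reals Lra Lia.
Open Scope R_scope.

Record prob_space (Omega : Type) := {
  event : (Omega -> Prop) -> Prop;
  Pr : (Omega -> Prop) -> R;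
  event_full : event (fun _ => True);
  event_compl : forall A, event A -> event (fun w => ~ A w);
  event_union : forall A : nat -> (Omega -> Prop),
      (forall m, event (A m)) -> event (fun w => exists m, A m w);
  Pr_nonneg : forall A, event A -> 0 <= Pr A;
  Pr_full : Pr (fun _ => True) = 1;
  Pr_sigma_additive : forall A : nat -> (Omega -> Prop),
      (forall m, event (A m)) ->
      (forall m p, m <> p -> forall w, A m w -> A p w -> False) ->
      infinite_sum (fun m => Pr (A m)) (Pr (fun w => exists m, A m w))
}.
Arguments event {Omega} _ _.
Arguments Pr {Omega} _ _.

Fixpoint rsum (f : nat -> R) (n : nat) : R :=
  match n with
  | O => 0
  | S m => rsum f m + f (S m)
  end.

Definition kdelta (j k : nat) : nat := if Nat.eqb j k then 1%nat else 0%nat.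

(* Main.v *)
Require Import Defs.
From Stdlib Require Import Reals Lra Lia Classical FunctionalExtensionality PropExtensionality.
Open Scope R_scope.

Section S.
Context {Omega : Type} (P : prob_space Omega).

Lemma Pr_ext (X Y : Omega -> Prop) : (forall w, X w <-> Y w) -> Pr P X = Pr P Y.
Proof. intros H. f_equal. apply functional_extensionality; intro w.
  apply propositional_extensionality; auto. Qed.

Lemma ev_ext (X Y : Omega -> Prop) : (forall w, X w <-> Y w) -> event P X -> event P Y.
Proof. intros H E. replace Y with X; auto. apply functional_extensionality; intro w.
  apply propositional_extensionality; auto. Qed.

Lemma ev_empty : event P (fun _ => False).
Proof. apply (ev_ext (fun w => ~ True)). intros; tauto. apply event_compl, event_full. Qed.

Lemma ev_not X : event P X -> event P (fun w => ~ X w).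
Proof. apply event_compl. Qed.

Lemma ev_or X Y : event P X -> event P Y -> event P (fun w => X w \/ Y w).
Proof. intros EX EY.
  apply (ev_ext (fun w => exists m, (match m with O => X | _ => Y end) w)).
  - intro w; split. intros [[|m] H]; auto. intros [H|H]. exists O; auto. exists 1%nat; auto.
  - apply event_union. intros [|m]; auto. Qed.

Lemma ev_and X Y : event P X -> event P Y -> event P (fun w => X w /\ Y w).
Proof. intros EX EY.
  apply (ev_ext (fun w => ~ (~ X w \/ ~ Y w))).
  - intro w; split. intros H. split; apply NNPP; tauto. tauto.
  - apply ev_not, ev_or; apply ev_not; auto. Qed.

Lemma Pr_empty : Pr P (fun _ => False) = 0.
Proof.
  pose proof (Pr_sigma_additive _ P (fun _ => fun _ => False) (fun _ => ev_empty)) as H.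
  assert (H' : infinite_sum (fun _ => Pr P (fun _ => False)) (Pr P (fun _ => False))).
  { assert (E : Pr P (fun w => exists m : nat, False) = Pr P (fun _ => False)).
    { apply Pr_ext. intro w; split; [intros [_ F]; exact F | tauto]. }
    cbv beta in H. rewrite E in H. apply H. intros m p _ w F. destruct F. }
  set (c := Pr P (fun _ => False)) in *.
  assert (c0 : 0 <= c) by (apply Pr_nonneg, ev_empty).
  destruct (Req_dec c 0) as [e|ne]; auto.
  assert (cp : 0 < c) by lra.
  destruct (H' (c/2)) as [N HN]; [lra|].
  pose proof (HN N (le_n N)) as H1. pose proof (HN (S N) (le_S _ _ (le_n N))) as H2.
  unfold R_dist in *. simpl in H2.
  apply Rabs_def2 in H1. apply Rabs_def2 in H2. lra.
Qed.

Lemma Pr_add X Y : event P X -> event P Y -> (forall w, X w -> Y w -> False) ->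
  Pr P (fun w => X w \/ Y w) = Pr P X + Pr P Y.
Proof. intros EX EY D.
  set (s := fun m : nat => match m with O => X | 1%nat => Y | _ => fun _ => False end).
  assert (Es : forall m, event P (s m)). { intros [|[|m]]; simpl; auto. apply ev_empty. }
  assert (Ds : forall m p, m <> p -> forall w, s m w -> s p w -> False).
  { intros [|[|m]] [|[|p]] hmp w; simpl; try tauto; try (intros; eapply D; eauto).
  }
  pose proof (Pr_sigma_additive _ P s Es Ds) as H.
  assert (H2 : infinite_sum (fun m => Pr P (s m)) (Pr P X + Pr P Y)).
  { intros eps He. exists 1%nat. intros m Hm.
    assert (Hs : forall t, sum_f_R0 (fun m => Pr P (s m)) (S t) = Pr P X + Pr P Y).
    { induction t. simpl. ring. change (sum_f_R0 (fun m => Pr P (s m)) (S t) + Pr P (s (S (S t))) = Pr P X + Pr P Y).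
      rewrite IHt. simpl. rewrite Pr_empty. ring. }
    destruct m. lia. rewrite Hs. unfold R_dist. rewrite Rminus_diag, Rabs_R0. auto. }
  rewrite <- (uniqueness_sum _ _ _ H H2). apply Pr_ext.
  intro w; split. intros [H0|H0]. exists O; auto. exists 1%nat; auto.
  intros [[|[|m]] Hm]; simpl in Hm; tauto.
Qed.

Lemma Pr_split X Y : event P X -> event P Y ->
  Pr P X = Pr P (fun w => X w /\ Y w) + Pr P (fun w => X w /\ ~ Y w).
Proof. intros EX EY. rewrite <- Pr_add.
  - apply Pr_ext. intro w. split. intro; destruct (classic (Y w)); tauto. tauto.
  - apply ev_and; auto.
  - apply ev_and; auto. apply ev_not; auto.
  - intros w; tauto. Qed.

Lemma Pr_mono X Y : event P X -> event P Y -> (forall w, X w -> Y w) -> Pr P X <= Pr P Y.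
Proof. intros EX EY H. rewrite (Pr_split Y X EY EX).
  replace (Pr P (fun w => Y w /\ X w)) with (Pr P X).
  pose proof (Pr_nonneg _ P (fun w => Y w /\ ~ X w) (ev_and _ _ EY (ev_not _ EX))). lra.
  apply Pr_ext. intro w; split; auto; tauto. Qed.
End S.

Lemma rsum_comb f1 f2 f3 f4 n :
  rsum f1 n - rsum f2 n - rsum f3 n + rsum f4 n = rsum (fun i => f1 i - f2 i - f3 i + f4 i) n.
Proof. induction n; simpl. ring. rewrite <- IHn. ring. Qed.

Lemma rsum_le f g n : (forall i, (1 <= i <= n)%nat -> f i <= g i) -> rsum f n <= rsum g n.
Proof. induction n; intros H; simpl. lra.
  apply Rplus_le_compat. apply IHn; intros; apply H; lia. apply H; lia. Qed.

Lemma rsum_plus f g n : rsum (fun i => f i + g i) n = rsum f n + rsum g n.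
Proof. induction n; simpl. ring. rewrite IHn. ring. Qed.

Lemma rsum_const c n : rsum (fun _ => c) n = INR n * c.
Proof. induction n; simpl rsum. simpl; ring. rewrite IHn, S_INR. ring. Qed.

Lemma rsum_zero j c n : (n < j)%nat -> rsum (fun i => if Nat.eqb i j then c else 0) n = 0.
Proof. induction n; intros H; cbn [rsum]. auto.
  rewrite IHn by lia. destruct (Nat.eqb_spec (S n) j). lia. ring. Qed.

Lemma rsum_single j c n : (1 <= j <= n)%nat -> rsum (fun i => if Nat.eqb i j then c else 0) n = c.
Proof. induction n; intros H. lia. cbn [rsum].
  destruct (Nat.eqb_spec (S n) j).
  - rewrite rsum_zero by lia. ring.
  - rewrite IHn by lia. ring. Qed.

Theorem corollary3 (Omega : Type) (P : prob_space Omega) (n : nat)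
  (A : nat -> (Omega -> Prop))
  (hA : forall i, (1 <= i <= n)%nat -> event P (A i))
  (j k : nat) (hj : (1 <= j <= n)%nat) (hk : (1 <= k <= n)%nat)
  (hn : (2 < n + kdelta j k)%nat) :
  Pr P (fun w => exists i, (1 <= i <= n)%nat /\ A i w) >=
  / (INR n - 2 + INR (kdelta j k)) *
  ( rsum (fun i => Pr P (A i)) n
  - rsum (fun i => if Nat.eqb i j then 0 else Pr P (fun w => A i w /\ A j w)) n
  - rsum (fun i => if orb (Nat.eqb i j) (Nat.eqb i k) then 0
                   else Pr P (fun w => A i w /\ A k w)) n
  + rsum (fun i => if orb (Nat.eqb i j) (Nat.eqb i k) then 0
                   else Pr P (fun w => A i w /\ A j w /\ A k w)) n ).
Proof.
  set (U := fun w => exists i, (1 <= i <= n)%nat /\ A i w).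
  assert (EU : event P U).
  { apply (ev_ext P (fun w => exists m, (fun w => (1 <= m <= n)%nat /\ A m w) w)).
    intro w; tauto. apply event_union. intro m.
    destruct (Compare_dec.le_dec 1 m); destruct (Compare_dec.le_dec m n).
    all: try (apply (ev_ext P (A m)); [intro w; split; [intro; split; [lia|auto] | tauto] | apply hA; lia]).
    all: apply (ev_ext P (fun _ => False)); [intro w; split; [tauto| intros [? _]; lia] | apply ev_empty]. }
  assert (Ej := hA j hj). assert (Ek := hA k hk).
  set (a := Pr P (A j)).
  set (r := Pr P (fun w => U w /\ ~ A j w /\ A k w)).
  set (q := Pr P (fun w => U w /\ ~ A j w /\ ~ A k w)).
  assert (Er : event P (fun w => U w /\ ~ A j w /\ A k w)).
  { apply ev_and; auto. apply ev_and; auto. apply ev_not; auto. }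
  assert (Eq : event P (fun w => U w /\ ~ A j w /\ ~ A k w)).
  { apply ev_and; auto. apply ev_and; apply ev_not; auto. }
  assert (HU : Pr P U = a + r + q).
  { rewrite (Pr_split P U (A j) EU Ej).
    pose proof (Pr_split P (fun w => U w /\ ~ A j w) (A k)) as H; cbv beta in H.
    rewrite H; [| apply ev_and; auto; apply ev_not; auto | auto].
    assert (Pr P (fun w => U w /\ A j w) = a).
    { apply Pr_ext; intro w; split; [tauto|]. intro; split; auto. exists j; auto. }
    assert (Pr P (fun w => (U w /\ ~ A j w) /\ A k w) = r) by (apply Pr_ext; intro w; tauto).
    assert (Pr P (fun w => (U w /\ ~ A j w) /\ ~ A k w) = q) by (apply Pr_ext; intro w; tauto).
    lra. }
  assert (a0 : 0 <= a) by (apply Pr_nonneg; auto).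
  assert (r0 : 0 <= r) by (apply Pr_nonneg; auto).
  assert (q0 : 0 <= q) by (apply Pr_nonneg; auto).
  rewrite rsum_comb.
  assert (Hs : rsum (fun i => Pr P (A i) -
     (if Nat.eqb i j then 0 else Pr P (fun w => A i w /\ A j w)) -
     (if orb (Nat.eqb i j) (Nat.eqb i k) then 0 else Pr P (fun w => A i w /\ A k w)) +
     (if orb (Nat.eqb i j) (Nat.eqb i k) then 0
                   else Pr P (fun w => A i w /\ A j w /\ A k w))) n
    <= rsum (fun i => q + (if Nat.eqb i j then a - q else 0)
             + (if Nat.eqb i k then (if Nat.eqb j k then 0 else r - q) else 0)) n).
  { apply rsum_le. intros i Hi. assert (Ei := hA i Hi).
    destruct (Nat.eqb_spec i j); destruct (Nat.eqb_spec i k); destruct (Nat.eqb_spec j k);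
      simpl; try subst i; try lia.
    - unfold a; lra.
    - unfold a; lra.
    - pose proof (Pr_split P (A k) (A j) Ek Ej) as H. cbv beta in H.
      assert (Pr P (fun w => A k w /\ ~ A j w) <= r).
      { apply Pr_mono. apply ev_and; auto. apply ev_not; auto. auto.
        intros w [H1 H2]. split; [exists k; auto | auto]. }
      lra.
    - pose proof (Pr_split P (A i) (A j) Ei Ej) as H1.
      pose proof (Pr_split P (fun w => A i w /\ ~ A j w) (A k)) as H2.
      pose proof (Pr_split P (fun w => A i w /\ A k w) (A j)) as H3.
      cbv beta in H1, H2, H3.
      rewrite H2 in H1 by (try apply ev_and; auto; apply ev_not; auto).
      rewrite H3 by (try apply ev_and; auto).
      assert (E1 : Pr P (fun w => (A i w /\ A k w) /\ A j w) = Pr P (fun w => A i w /\ A j w /\ A k w))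
        by (apply Pr_ext; intro; tauto).
      assert (E2 : Pr P (fun w => (A i w /\ A k w) /\ ~ A j w) = Pr P (fun w => (A i w /\ ~ A j w) /\ A k w))
        by (apply Pr_ext; intro; tauto).
      assert (Pr P (fun w => (A i w /\ ~ A j w) /\ ~ A k w) <= q).
      { apply Pr_mono; auto. apply ev_and; [apply ev_and|]; auto; apply ev_not; auto.
        intros w [[H4 H5] H6]. split; [exists i; auto | auto]. }
      lra.
    - pose proof (Pr_split P (A i) (A j) Ei Ej) as H1.
      pose proof (Pr_split P (fun w => A i w /\ ~ A j w) (A k)) as H2.
      pose proof (Pr_split P (fun w => A i w /\ A k w) (A j)) as H3.
      cbv beta in H1, H2, H3.
      rewrite H2 in H1 by (try apply ev_and; auto; apply ev_not; auto).
      rewrite H3 by (try apply ev_and; auto).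
      assert (E1 : Pr P (fun w => (A i w /\ A k w) /\ A j w) = Pr P (fun w => A i w /\ A j w /\ A k w))
        by (apply Pr_ext; intro; tauto).
      assert (E2 : Pr P (fun w => (A i w /\ A k w) /\ ~ A j w) = Pr P (fun w => (A i w /\ ~ A j w) /\ A k w))
        by (apply Pr_ext; intro; tauto).
      assert (Pr P (fun w => (A i w /\ ~ A j w) /\ ~ A k w) <= q).
      { apply Pr_mono; auto. apply ev_and; [apply ev_and|]; auto; apply ev_not; auto.
        intros w [[H4 H5] H6]. split; [exists i; auto | auto]. }
      lra. }
  assert (HR : rsum (fun i => q + (if Nat.eqb i j then a - q else 0)
             + (if Nat.eqb i k then (if Nat.eqb j k then 0 else r - q) else 0)) n
     = INR n * q + (a - q) + (if Nat.eqb j k then 0 else r - q)).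
  { rewrite (rsum_plus (fun i => q + (if Nat.eqb i j then a - q else 0))).
    rewrite (rsum_plus (fun i => q)), rsum_const, rsum_single, rsum_single by auto. reflexivity. }
  rewrite HR in Hs.
  unfold kdelta. fold U. rewrite HU.
  assert (n2 : (2 <= n)%nat). { unfold kdelta in hn. destruct (Nat.eqb j k); lia. }
  destruct (Nat.eqb_spec j k).
  - simpl INR. assert (INR n >= 2). { replace 2 with (INR 2) by (simpl; ring). apply Rle_ge, le_INR; auto. }
    set (m := INR n - 2 + 1) in *.
    apply Rle_ge. apply (Rmult_le_reg_l m). unfold m; lra.
    rewrite <- Rmult_assoc, Rinv_r by (unfold m; lra).
    assert (m * (a + r + q) >= INR n * q + (a - q) + 0).
    { unfold m. nra. } lra.
  - simpl INR. assert (INR n >= 3).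
    { unfold kdelta in hn. destruct (Nat.eqb_spec j k); [contradiction|].
      replace 3 with (INR 3) by (simpl; ring). apply Rle_ge, le_INR; lia. }
    set (m := INR n - 2 + 0) in *.
    apply Rle_ge. apply (Rmult_le_reg_l m). unfold m; lra.
    rewrite <- Rmult_assoc, Rinv_r by (unfold m; lra).
    assert (m * (a + r + q) >= INR n * q + (a - q) + (r - q)).
    { unfold m. nra. } lra.
Qed.
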